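(* Let $\mathbb{R}^{3,1}$ denote $\mathbb{R}^4$ with the inner product $\langle\langle X,Y\rangle\rangle = X_1Y_1+X_2Y_2+X_3Y_3-X_4Y_4$. Let $S\colon\mathbb{R}^2\to\mathbb{R}^{3,1}$ be a regular smooth net with an attached tangent isotropic hyperplane congruence $P$, and let $N(u,v)$ be a normal vector to $P(u,v)$ depending smoothly on $(u,v)$. Let $C\colon[0,1]\to S(\mathbb{R}^2)$, $C(t)=S(u(t),v(t))$, be a regular smooth curve such that the family of hyperplanes $t\mapsto P(u(t),v(t))$ (written as $\langle\langle X-C(t),N(u(t),v(t))\rangle\rangle=0$) is regular, and hence has an envelope. Then at each point $C(t)$, any tangent line to the surface $S(\mathbb{R}^2)$ that is contained in the characteristic plane $\Pi(t)$ of this envelope is L-conjugate to the tangent line of $C$ at $C(t)$ with respect to $P$.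
   Context: An isotropic hyperplane in $\mathbb{R}^{3,1}$ is a hyperplane $\{(x,x_4): x_4=\langle n,x\rangle+h\}$ with $n\in\mathbb{R}^3$ a Euclidean unit vector, $h\in\mathbb{R}$. A regular smooth net is a smooth map $S\colon\mathbb{R}^2\to\mathbb{R}^{3,1}$ with $S_u\not\parallel S_v$ everywhere; an attached tangent isotropic hyperplane congruence is a smooth map $(u,v)\mapsto P(u,v)$ to isotropic hyperplanes with $S(u,v)\in P(u,v)$ and $S_u,S_v$ parallel to $P(u,v)$. For a family of hyperplanes $P(t):\langle\langle X-S(t),N(t)\rangle\rangle=0$, $t\in[0,1]$, with $S,N$ smooth, the family is regular if $\dot N(t)\not\parallel N(t)$ for all $t$; then $\dot P(t)$ denotes the hyperplane $\langle\langle X-S(t),\dot N(t)\rangle\rangle-\langle\langle \dot S(t),N(t)\rangle\rangle=0$, the characteristic plane is $\Pi(t)=P(t)\cap\dot P(t)$, and the union of the $\Pi(t)$ is the envelope. L-conjugacy: define $L_P=\langle\langle S_{uu},N\rangle\rangle$, $M_P=\langle\langle S_{uv},N\rangle\rangle$, $N_P=\langle\langle S_{vv},N\rangle\rangle$ and $\mathrm{II}_{S,P}(A,B)=L_Pa_1b_1+M_P(a_1b_2+a_2b_1)+N_Pa_2b_2$ for $A=a_1S_u+a_2S_v$, $B=b_1S_u+b_2S_v$. Two non-parallel tangent vectors $T_1,T_2$ at $S(u,v)$ are L-conjugate with respect to $P$ if there is a diffeomorphism $D$ of $\mathbb{R}^2$ such that for $\bar S=S\circ D$, $\bar P=P\circ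 D$, at the corresponding parameter $\bar S_u\parallel T_1$, $\bar S_v\parallel T_2$ and $\bar S_u,\bar S_v,\bar S_{uv}$ are parallel to $\bar P$ (equivalently, $\mathrm{II}_{S,P}(T_1,T_2)=0$); a tangent vector $A$ is called L-conjugate to itself with respect to $P$ if $\mathrm{II}_{S,P}(A,A)=0$. Tangent lines are L-conjugate if their direction vectors are. *)

(* Defs.v *)
From Stdlib Require Import Reals.
From Coquelicot Require Import Coquelicot.
Open Scope R_scope.

Record V4 := mk4 { c1 : R; c2 : R; c3 : R; c4 : R }.

Definition mink (X Y : V4) : R :=
  c1 X * c1 Y + c2 X * c2 Y + c3 X * c3 Y - c4 X * c4 Y.

Definition vadd (X Y : V4) : V4 :=
  mk4 (c1 X + c1 Y) (c2 X + c2 Y) (c3 X + c3 Y) (c4 X + c4 Y).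
Definition vscal (a : R) (X : V4) : V4 :=
  mk4 (a * c1 X) (a * c2 X) (a * c3 X) (a * c4 X).
Definition vsub (X Y : V4) : V4 := vadd X (vscal (-1) Y).
Definition vzero : V4 := mk4 0 0 0 0.

Definition not_parallel (X Y : V4) : Prop :=
  forall a b : R, vadd (vscal a X) (vscal b Y) = vzero -> a = 0 /\ b = 0.

Definition du (f : R -> R -> R) : R -> R -> R :=
  fun u v => Derive (fun x => f x v) u.
Definition dv (f : R -> R -> R) : R -> R -> R :=
  fun u v => Derive (fun y => f u y) v.

Fixpoint Ck (k : nat) (f : R -> R -> R) : Prop :=
  match k with
  | O => forall u v : R, continuous (fun p : R * R => f (fst p) (snd p)) (u, v)
  | S m =>
      (forall u v : R, continuous (fun p : R * R => f (fst p) (snd p)) (u, v)) /\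
      (forall u v : R, ex_derive (fun x => f x v) u /\ ex_derive (fun y => f u y) v) /\
      Ck m (du f) /\ Ck m (dv f)
  end.

Definition smooth2 (f : R -> R -> R) : Prop := forall k, Ck k f.

Definition smooth1 (f : R -> R) : Prop := forall (k : nat) (x : R), ex_derive_n f k x.

Definition smooth_net (S : R -> R -> V4) : Prop :=
  smooth2 (fun u v => c1 (S u v)) /\ smooth2 (fun u v => c2 (S u v)) /\
  smooth2 (fun u v => c3 (S u v)) /\ smooth2 (fun u v => c4 (S u v)).

Definition Du (S : R -> R -> V4) : R -> R -> V4 := fun u v =>
  mk4 (du (fun a b => c1 (S a b)) u v) (du (fun a b => c2 (S a b)) u v)
      (du (fun a b => c3 (S a b)) u v) (du (fun a b => c4 (S a b)) u v).
Definition Dv (S : R -> R -> V4) : R -> R -> V4 := fun u v =>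
  mk4 (dv (fun a b => c1 (S a b)) u v) (dv (fun a b => c2 (S a b)) u v)
      (dv (fun a b => c3 (S a b)) u v) (dv (fun a b => c4 (S a b)) u v).
Definition Dt (C : R -> V4) (t : R) : V4 :=
  mk4 (Derive (fun s => c1 (C s)) t) (Derive (fun s => c2 (C s)) t)
      (Derive (fun s => c3 (C s)) t) (Derive (fun s => c4 (C s)) t).

Definition regular_net (S : R -> R -> V4) : Prop :=
  smooth_net S /\ forall u v, not_parallel (Du S u v) (Dv S u v).

(* the isotropic hyperplane {(x,x4) : x4 = <n,x> + h}, n a Euclidean unit
   vector of R^3, encoded by (n1,n2,n3,h) *)
Record IsoHyp := mkIH { n1 : R; n2 : R; n3 : R; hh : R }.

Definition is_iso_hyp (P : IsoHyp) : Prop :=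
  n1 P ^ 2 + n2 P ^ 2 + n3 P ^ 2 = 1.

Definition in_hyp (P : IsoHyp) (X : V4) : Prop :=
  c4 X = n1 P * c1 X + n2 P * c2 X + n3 P * c3 X + hh P.

Definition parallel_to_hyp (P : IsoHyp) (X : V4) : Prop :=
  c4 X = n1 P * c1 X + n2 P * c2 X + n3 P * c3 X.

Definition normal_of (P : IsoHyp) (N : V4) : Prop :=
  N <> vzero /\ forall X Y, in_hyp P X -> in_hyp P Y -> mink (vsub X Y) N = 0.

Definition tangent_iso_congruence (S : R -> R -> V4) (P : R -> R -> IsoHyp) : Prop :=
  smooth2 (fun u v => n1 (P u v)) /\ smooth2 (fun u v => n2 (P u v)) /\
  smooth2 (fun u v => n3 (P u v)) /\ smooth2 (fun u v => hh (P u v)) /\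
  (forall u v, is_iso_hyp (P u v)) /\
  (forall u v, in_hyp (P u v) (S u v)) /\
  (forall u v, parallel_to_hyp (P u v) (Du S u v)) /\
  (forall u v, parallel_to_hyp (P u v) (Dv S u v)).

(* II_{S,P}(A,B) for A = a1 Su + a2 Sv, B = b1 Su + b2 Sv, at (u,v) *)
Definition IIform (S : R -> R -> V4) (N : R -> R -> V4) (u v a1 a2 b1 b2 : R) : R :=
  let LP := mink (Du (Du S) u v) (N u v) in
  let MP := mink (Dv (Du S) u v) (N u v) in
  let NP := mink (Dv (Dv S) u v) (N u v) in
  LP * a1 * b1 + MP * (a1 * b2 + a2 * b1) + NP * a2 * b2.

Definition L_conjugate (S : R -> R -> V4) (N : R -> R -> V4) (u v a1 a2 b1 b2 : R) : Prop :=
  IIform S N u v a1 a2 b1 b2 = 0.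

Definition tvec (S : R -> R -> V4) (u v a1 a2 : R) : V4 :=
  vadd (vscal a1 (Du S u v)) (vscal a2 (Dv S u v)).

Definition in_Pt (C Nt : R -> V4) (t : R) (X : V4) : Prop :=
  mink (vsub X (C t)) (Nt t) = 0.
Definition in_Pdot (C Nt : R -> V4) (t : R) (X : V4) : Prop :=
  mink (vsub X (C t)) (Dt Nt t) - mink (Dt C t) (Nt t) = 0.
Definition in_Pi (C Nt : R -> V4) (t : R) (X : V4) : Prop :=
  in_Pt C Nt t X /\ in_Pdot C Nt t X.

Definition regular_family (Nt : R -> V4) : Prop :=
  forall t, 0 <= t <= 1 -> not_parallel (Dt Nt t) (Nt t).

(* Main.v *)
Require Import Defs.
From Stdlib Require Import Reals Lra.
From Coquelicot Require Import Coquelicot.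
Open Scope R_scope.
Local Notation c1 := Defs.c1.
Local Notation c2 := Defs.c2.
Local Notation c3 := Defs.c3.
Local Notation c4 := Defs.c4.

Lemma sm_cont f : smooth2 f -> forall x y, continuity_2d_pt f x y.
Proof. intros H x y. apply continuity_2d_pt_filterlim. apply (H (S 0%nat)). Qed.
Lemma sm_ex f : smooth2 f -> forall x y, ex_derive (fun a => f a y) x /\ ex_derive (fun b => f x b) y.
Proof. intros H x y. apply (H 1%nat). Qed.
Lemma sm_du f : smooth2 f -> smooth2 (du f).
Proof. intros H k. apply (H (S k)). Qed.
Lemma sm_dv f : smooth2 f -> smooth2 (dv f).
Proof. intros H k. apply (H (S k)). Qed.
Lemma sm_exdiff n : forall f, smooth2 f -> forall x y, ex_diff_n f n x y.
Proof.
induction n; intros f H x y.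
- split; [apply sm_cont; exact H| exact I].
- split; [apply sm_cont; exact H|]. split; [exact (proj1 (sm_ex f H x y))|]. split; [exact (proj2 (sm_ex f H x y))|].
  split; [exact (IHn (du f) (sm_du f H) x y) | exact (IHn (dv f) (sm_dv f H) x y)].
Qed.
Lemma C00 : Binomial.C 0 0 = 1. Proof. unfold Binomial.C. simpl. field. Qed.
Lemma C10 : Binomial.C 1 0 = 1. Proof. unfold Binomial.C. simpl. field. Qed.
Lemma C11 : Binomial.C 1 1 = 1. Proof. unfold Binomial.C. simpl. field. Qed.
Lemma DL1 f x y dx dy : DL_pol 1 f x y dx dy = f x y + du f x y * dx + dv f x y * dy.
Proof. unfold DL_pol, differential. cbn [sum_f_R0 Nat.sub pow Factorial.fact INR].
rewrite C00, C10, C11. unfold partial_derive. cbn [Derive_n]. unfold du, dv. change (INR (1*1)) with 1. field. Qed.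
Lemma diff2 f x y : smooth2 f -> differentiable_pt_lim f x y (du f x y) (dv f x y).
Proof.
intros H.
assert (DL : DL_regular_n f 1 x y).
{ apply Taylor_Lagrange_2d. exists (mkposreal 1 Rlt_0_1). intros. apply sm_exdiff; auto. }
destruct DL as [D [d Hd]].
intro eps.
assert (Hp : 0 < eps / (Rabs D + 1)).
{ apply Rdiv_lt_0_compat. apply cond_pos. pose proof (Rabs_pos D); lra. }
exists (mkposreal _ (Rmin_pos _ _ (cond_pos d) Hp)).
intros a b Ha Hb. simpl in Ha, Hb.
pose proof (Rmin_l d (eps / (Rabs D + 1))) as M1.
pose proof (Rmin_r d (eps / (Rabs D + 1))) as M2.
specialize (Hd a b ltac:(lra) ltac:(lra)).
rewrite DL1 in Hd.
set (M := Rmax (Rabs (a - x)) (Rabs (b - y))) in *.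
assert (HM : M < eps / (Rabs D + 1)).
{ unfold M. apply Rmax_lub_lt; lra. }
assert (HM0 : 0 <= M).
{ unfold M. apply Rle_trans with (Rabs (a-x)). apply Rabs_pos. apply Rmax_l. }
replace (f a b - f x y - (du f x y * (a - x) + dv f x y * (b - y)))
  with (f a b - (f x y + du f x y * (a - x) + dv f x y * (b - y))) by ring.
eapply Rle_trans; [exact Hd|].
assert (HD : D <= Rabs D) by apply Rle_abs.
assert (HD0 : 0 <= Rabs D) by apply Rabs_pos.
assert (HM' : (Rabs D + 1) * M <= eps).
{ apply Rlt_le. replace (pos eps) with ((Rabs D + 1) * (eps / (Rabs D + 1))) by (field; lra).
  apply Rmult_lt_compat_l; lra. }
simpl. 
assert (HMM : 0 <= M * M) by (apply Rmult_le_pos; lra).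
apply Rle_trans with ((Rabs D + 1) * M * M).
{ rewrite Rmult_1_r, Rmult_assoc. apply Rmult_le_compat_r; lra. }
apply Rmult_le_compat_r; lra.
Qed.

Lemma chain f (u v : R -> R) t : smooth2 f -> ex_derive u t -> ex_derive v t ->
  Derive (fun s => f (u s) (v s)) t = du f (u t) (v t) * Derive u t + dv f (u t) (v t) * Derive v t.
Proof.
intros H Hu Hv. apply is_derive_unique. apply is_derive_Reals.
apply derivable_pt_lim_comp_2d. apply diff2; auto.
apply is_derive_Reals, Derive_correct; auto.
apply is_derive_Reals, Derive_correct; auto.
Qed.

Lemma schw f x y : smooth2 f -> du (dv f) x y = dv (du f) x y.
Proof.
intros H.
assert (h1 : locally_2d (fun u v : R =>
          ex_derive (fun z : R => f z v) u /\
          ex_derive (fun z : R => f u z) v /\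
          ex_derive (fun z : R => Derive (fun t : R => f z t) v) u /\
          ex_derive (fun z : R => Derive (fun t : R => f t z) u) v) x y).
{ exists (mkposreal 1 Rlt_0_1). intros a b _ _.
  split; [exact (proj1 (sm_ex f H a b))|]. split; [exact (proj2 (sm_ex f H a b))|].
  split; [exact (proj1 (sm_ex (dv f) (sm_dv f H) a b)) | exact (proj2 (sm_ex (du f) (sm_du f H) a b))]. }
exact (Schwarz f x y h1 (sm_cont (du (dv f)) (sm_du _ (sm_dv f H)) x y) (sm_cont (dv (du f)) (sm_dv _ (sm_du f H)) x y)).
Qed.

Lemma L0 (f1 f2 f3 f4 g1 g2 g3 g4 : R -> R) x :
  ex_derive f1 x -> ex_derive f2 x -> ex_derive f3 x -> ex_derive f4 x ->
  ex_derive g1 x -> ex_derive g2 x -> ex_derive g3 x -> ex_derive g4 x ->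
  is_derive (fun a => f1 a * g1 a + f2 a * g2 a + f3 a * g3 a - f4 a * g4 a) x
   ((Derive f1 x * g1 x + Derive f2 x * g2 x + Derive f3 x * g3 x - Derive f4 x * g4 x)
    + (f1 x * Derive g1 x + f2 x * Derive g2 x + f3 x * Derive g3 x - f4 x * Derive g4 x)).
Proof. intros. auto_derive. repeat split; auto. change (fun y : R => f1 y) with f1; change (fun y : R => f2 y) with f2; change (fun y : R => f3 y) with f3; change (fun y : R => f4 y) with f4; change (fun y : R => g1 y) with g1; change (fun y : R => g2 y) with g2; change (fun y : R => g3 y) with g3; change (fun y : R => g4 y) with g4. ring. Qed.

Lemma L1 (F G : R -> V4) x :
  ex_derive (fun a => c1 (F a)) x -> ex_derive (fun a => c2 (F a)) x ->
  ex_derive (fun a => c3 (F a)) x -> ex_derive (fun a => c4 (F a)) x ->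
  ex_derive (fun a => c1 (G a)) x -> ex_derive (fun a => c2 (G a)) x ->
  ex_derive (fun a => c3 (G a)) x -> ex_derive (fun a => c4 (G a)) x ->
  (forall a, mink (F a) (G a) = 0) ->
  mink (Dt F x) (G x) + mink (F x) (Dt G x) = 0.
Proof.
intros. 
assert (Hd : is_derive (fun a => mink (F a) (G a)) x (mink (Dt F x) (G x) + mink (F x) (Dt G x))).
{ unfold mink, Dt; simpl. apply (L0 (fun a => c1 (F a)) (fun a => c2 (F a)) (fun a => c3 (F a)) (fun a => c4 (F a)) (fun a => c1 (G a)) (fun a => c2 (G a)) (fun a => c3 (G a)) (fun a => c4 (G a))); auto. }
assert (Hz : is_derive (fun a => mink (F a) (G a)) x 0).
{ eapply is_derive_ext. intro a. symmetry. apply H7. auto_derive; auto. }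
rewrite <- (is_derive_unique _ _ _ Hd). apply (is_derive_unique _ _ _ Hz).
Qed.

Lemma orth P N Y X : normal_of P N -> in_hyp P Y -> parallel_to_hyp P X -> mink X N = 0.
Proof.
intros [_ Hn] HY HX.
replace (mink X N) with (mink (vsub (vadd Y X) Y) N).
- apply Hn; auto. unfold in_hyp, parallel_to_hyp in *. destruct X, Y; simpl in *. rewrite HY, HX. ring.
- destruct X, Y, N; unfold mink, vsub, vadd, vscal; simpl; ring.
Qed.

Lemma sn_Du A : smooth_net A -> smooth_net (Du A).
Proof. intros [h1 [h2 [h3 h4]]]. exact (conj (sm_du _ h1) (conj (sm_du _ h2) (conj (sm_du _ h3) (sm_du _ h4)))). Qed.
Lemma sn_Dv A : smooth_net A -> smooth_net (Dv A).
Proof. intros [h1 [h2 [h3 h4]]]. exact (conj (sm_dv _ h1) (conj (sm_dv _ h2) (conj (sm_dv _ h3) (sm_dv _ h4)))). Qed.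

Lemma Ldu A B x y : smooth_net A -> smooth_net B -> (forall a b, mink (A a b) (B a b) = 0) ->
  mink (Du A x y) (B x y) + mink (A x y) (Du B x y) = 0.
Proof.
intros [h1 [h2 [h3 h4]]] [k1 [k2 [k3 k4]]] H.
exact (L1 (fun a => A a y) (fun a => B a y) x
  (proj1 (sm_ex _ h1 x y)) (proj1 (sm_ex _ h2 x y)) (proj1 (sm_ex _ h3 x y)) (proj1 (sm_ex _ h4 x y))
  (proj1 (sm_ex _ k1 x y)) (proj1 (sm_ex _ k2 x y)) (proj1 (sm_ex _ k3 x y)) (proj1 (sm_ex _ k4 x y))
  (fun a => H a y)).
Qed.

Lemma Ldv A B x y : smooth_net A -> smooth_net B -> (forall a b, mink (A a b) (B a b) = 0) ->
  mink (Dv A x y) (B x y) + mink (A x y) (Dv B x y) = 0.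
Proof.
intros [h1 [h2 [h3 h4]]] [k1 [k2 [k3 k4]]] H.
exact (L1 (fun b => A x b) (fun b => B x b) y
  (proj2 (sm_ex _ h1 x y)) (proj2 (sm_ex _ h2 x y)) (proj2 (sm_ex _ h3 x y)) (proj2 (sm_ex _ h4 x y))
  (proj2 (sm_ex _ k1 x y)) (proj2 (sm_ex _ k2 x y)) (proj2 (sm_ex _ k3 x y)) (proj2 (sm_ex _ k4 x y))
  (fun b => H x b)).
Qed.

Lemma symm A x y : smooth_net A -> Du (Dv A) x y = Dv (Du A) x y.
Proof.
intros [h1 [h2 [h3 h4]]].
change (mk4 (du (dv (fun a b => c1 (A a b))) x y) (du (dv (fun a b => c2 (A a b))) x y)
            (du (dv (fun a b => c3 (A a b))) x y) (du (dv (fun a b => c4 (A a b))) x y) =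
        mk4 (dv (du (fun a b => c1 (A a b))) x y) (dv (du (fun a b => c2 (A a b))) x y)
            (dv (du (fun a b => c3 (A a b))) x y) (dv (du (fun a b => c4 (A a b))) x y)).
rewrite (schw _ x y h1), (schw _ x y h2), (schw _ x y h3), (schw _ x y h4). reflexivity.
Qed.

Lemma chainN A (u v : R -> R) t : smooth_net A -> ex_derive u t -> ex_derive v t ->
  Dt (fun s => A (u s) (v s)) t =
  vadd (vscal (Derive u t) (Du A (u t) (v t))) (vscal (Derive v t) (Dv A (u t) (v t))).
Proof.
intros [h1 [h2 [h3 h4]]] Hu Hv.
unfold Dt, vadd, vscal.
change (mk4 (Derive (fun s => (fun a b => c1 (A a b)) (u s) (v s)) t)
            (Derive (fun s => (fun a b => c2 (A a b)) (u s) (v s)) t)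
            (Derive (fun s => (fun a b => c3 (A a b)) (u s) (v s)) t)
            (Derive (fun s => (fun a b => c4 (A a b)) (u s) (v s)) t) =
        mk4 (Derive u t * du (fun a b => c1 (A a b)) (u t) (v t) + Derive v t * dv (fun a b => c1 (A a b)) (u t) (v t))
            (Derive u t * du (fun a b => c2 (A a b)) (u t) (v t) + Derive v t * dv (fun a b => c2 (A a b)) (u t) (v t))
            (Derive u t * du (fun a b => c3 (A a b)) (u t) (v t) + Derive v t * dv (fun a b => c3 (A a b)) (u t) (v t))
            (Derive u t * du (fun a b => c4 (A a b)) (u t) (v t) + Derive v t * dv (fun a b => c4 (A a b)) (u t) (v t))).
f_equal.
- etransitivity; [exact (chain _ u v t h1 Hu Hv)| ring].
- etransitivity; [exact (chain _ u v t h2 Hu Hv)| ring].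
- etransitivity; [exact (chain _ u v t h3 Hu Hv)| ring].
- etransitivity; [exact (chain _ u v t h4 Hu Hv)| ring].
Qed.

Lemma msc C T W s : mink (vsub (vadd C (vscal s T)) C) W = s * mink T W.
Proof. destruct C, T, W; unfold mink, vsub, vadd, vscal; simpl; ring. Qed.

Lemma mbil a b c d X Y Z W :
  mink (vadd (vscal a X) (vscal b Y)) (vadd (vscal c Z) (vscal d W)) =
  a*c*mink X Z + a*d*mink X W + b*c*mink Y Z + b*d*mink Y W.
Proof. destruct X, Y, Z, W; unfold mink, vadd, vscal; simpl; ring. Qed.

Theorem proposition1
  (S : R -> R -> V4) (P : R -> R -> IsoHyp) (N : R -> R -> V4)
  (u v : R -> R) :
  regular_net S ->
  tangent_iso_congruence S P ->
  smooth_net N ->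
  (forall a b : R, normal_of (P a b) (N a b)) ->
  smooth1 u -> smooth1 v ->
  (forall t : R, 0 <= t <= 1 -> Dt (fun s => S (u s) (v s)) t <> vzero) ->
  regular_family (fun s => N (u s) (v s)) ->
  forall t : R, 0 <= t <= 1 ->
  forall a1 a2 : R, (a1 <> 0 \/ a2 <> 0) ->
  (forall s : R,
     in_Pi (fun r => S (u r) (v r)) (fun r => N (u r) (v r)) t
       (vadd (S (u t) (v t)) (vscal s (tvec S (u t) (v t) a1 a2)))) ->
  L_conjugate S N (u t) (v t) a1 a2 (Derive u t) (Derive v t).
Proof.
intros [HS _] HP HN Hnorm Hu Hv _ _ t _ a1 a2 _ HPi.
destruct HP as [_ [_ [_ [_ [_ [Hin [HpU HpV]]]]]]].
assert (oU : forall a b, mink (Du S a b) (N a b) = 0).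
{ intros a b. exact (orth _ _ _ _ (Hnorm a b) (Hin a b) (HpU a b)). }
assert (oV : forall a b, mink (Dv S a b) (N a b) = 0).
{ intros a b. exact (orth _ _ _ _ (Hnorm a b) (Hin a b) (HpV a b)). }
assert (hu : ex_derive u t) by exact (Hu 1%nat t).
assert (hv : ex_derive v t) by exact (Hv 1%nat t).
set (x := u t) in *. set (y := v t) in *.
pose proof (Ldu (Du S) N x y (sn_Du S HS) HN oU) as E1.
pose proof (Ldv (Du S) N x y (sn_Du S HS) HN oU) as E2.
pose proof (Ldu (Dv S) N x y (sn_Dv S HS) HN oV) as E3.
pose proof (Ldv (Dv S) N x y (sn_Dv S HS) HN oV) as E4.
rewrite (symm S x y HS) in E3.
destruct (HPi 0) as [_ H0]. destruct (HPi 1) as [_ H1].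
unfold in_Pdot in H0, H1. cbv beta in H0, H1.
rewrite msc in H0, H1.
assert (HT : mink (tvec S x y a1 a2) (Dt (fun r => N (u r) (v r)) t) = 0) by lra.
rewrite (chainN N u v t HN hu hv) in HT. fold x y in HT.
unfold tvec in HT. rewrite mbil in HT.
unfold L_conjugate, IIform. cbv zeta.
set (LP := mink (Du (Du S) x y) (N x y)) in *.
set (MP := mink (Dv (Du S) x y) (N x y)) in *.
set (NP := mink (Dv (Dv S) x y) (N x y)) in *.
set (A := mink (Du S x y) (Du N x y)) in *.
set (B := mink (Du S x y) (Dv N x y)) in *.
set (Cc := mink (Dv S x y) (Du N x y)) in *.
set (D := mink (Dv S x y) (Dv N x y)) in *.
set (u' := Derive u t) in *. set (v' := Derive v t) in *.
assert (K1 : a1 * u' * (LP + A) = 0) by (rewrite E1; ring).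
assert (K2 : a1 * v' * (MP + B) = 0) by (rewrite E2; ring).
assert (K3 : a2 * u' * (MP + Cc) = 0) by (rewrite E3; ring).
assert (K4 : a2 * v' * (NP + D) = 0) by (rewrite E4; ring).
lra.
Qed.
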